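(* Let $\Gamma$ be a finite undirected simple graph with vertices $x_1,\dots,x_n$ and edge set $E$, and let $G_\Gamma$ be the associated group with commutator generators $y_1,\dots,y_N$. For $d\in\{1,\dots,n-1\}$ let $V_d=\{x_i : \deg(x_i)\ge d\}$ and \[H_d=\Big\{\prod_{x_i\in V_d}x_i^{z_i}\prod_{l=1}^N y_l^{t_l}\ :\ z_i,t_l\in\mathbb{Z}\Big\}\subseteq G_\Gamma\] (products taken in increasing order of indices). Then for every $d\in\{1,\dots,n-1\}$, $H_d$ is a characteristic subgroup of $G_\Gamma$, i.e. $\varphi(H_d)=H_d$ for every automorphism $\varphi$ of $G_\Gamma$.
   Context: For a finite undirected simple graph $\Gamma$ with vertex set $\{x_1,\dots,x_n\}$ and edge set $E$, the group $G_\Gamma$ is defined by the presentation with generators $x_1,\dots,x_n$ and $y_{i,j}$ for each pair $i<j$ with $x_ix_j\notin E$, and relations $[x_j,x_i]=1$ if $x_ix_j\in E$; $[x_j,x_i]=y_{i,j}$ if $x_ix_j\notin E$ and $i<j$; and $[x_l,y_{i,j}]=1$ for all $l$ and all such $y_{i,j}$. Let $N$ be the number of pairs $i<j$ with $x_ix_j\notin E$, and enumerate the $y_{i,j}$ as $y_1,\dots,y_N$. Every element of $G_\Gamma$ is uniquely of the form $x_1^{z_1}\cdots x_n^{z_n}y_1^{t_1}\cdots y_N^{t_N}$. *)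

(* Defs.v *)
From HB Require Import structures.
From mathcomp Require Import all_boot all_order all_algebra.
Set Implicit Arguments. Unset Strict Implicit. Unset Printing Implicit Defensive.
Import Order.TTheory GRing.Theory Num.Theory.
Local Open Scope ring_scope.

(* Index set of the generators y_{i,j}: pairs i < j with x_i x_j not an edge. *)
Definition nonedge (n : nat) (e : rel 'I_n) (p : 'I_n * 'I_n) : bool :=
  ((p.1 < p.2)%N) && ~~ e p.1 p.2.

Definition Yidx (n : nat) (e : rel 'I_n) := {p : 'I_n * 'I_n | nonedge e p}.

(* An element x_1^{z_1} ... x_n^{z_n} y_1^{t_1} ... y_N^{t_N} of G_Gamma,
   in its unique normal form. *)
Record GG (n : nat) (e : rel 'I_n) := mkGG {
  gz : {ffun 'I_n -> int};
  gt : {ffun Yidx e -> int}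
}.

(* With [a,b] = a^-1 b^-1 a b, the
   relation [x_j, x_i] = y_{ij} (i<j) gives x_j^a x_i^b = x_i^b x_j^a y_{ij}^{ab},
   and the y's are central.  Hence
   (x^z y^t)(x^z' y^t') = x^(z+z') y^(t + t' + c) with c_{ij} = z_j z'_i. *)
Definition GGmul (n : nat) (e : rel 'I_n) (a b : GG e) : GG e :=
  mkGG [ffun i => gz a i + gz b i]
       [ffun p : Yidx e => gt a p + gt b p + gz a (val p).2 * gz b (val p).1].

Definition deg (n : nat) (e : rel 'I_n) (i : 'I_n) : nat := #|[set j | e i j]|.

Definition inH (n : nat) (e : rel 'I_n) (d : nat) (g : GG e) : Prop :=
  forall i : 'I_n, (deg e i < d)%N -> gz g i = 0.

Definition is_aut (n : nat) (e : rel 'I_n) (phi : GG e -> GG e) : Prop :=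
  bijective phi /\ forall a b, phi (GGmul a b) = GGmul (phi a) (phi b).

(* Main.v *)
Require Import Defs.
From HB Require Import structures.
From mathcomp Require Import all_boot all_order all_algebra.
Set Implicit Arguments. Unset Strict Implicit. Unset Printing Implicit Defensive.
Import Order.TTheory GRing.Theory Num.Theory.
Local Open Scope ring_scope.

Lemma dep_lemma (r s : nat) (w : 'I_r -> 'I_s -> int) : (s < r)%N ->
  exists m : 'I_r -> int, (exists r0, m r0 != 0) /\
     forall c, \sum_k m k * w k c = 0.
Proof.
move=> lt_sr.
pose A : 'M[rat]_(r, s) := \matrix_(k, c) (w k c)%:~R.
have nfree : ~~ row_free A.
  rewrite /row_free; apply/negP => /eqP H.
  by have := rank_leq_col A; rewrite H leqNgt lt_sr.
have : kermx A != 0 by rewrite kermx_eq0.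
case/matrix0Pn => i0 [j0 nz].
pose c k := kermx A i0 k.
have hc : forall col, \sum_k c k * A k col = 0.
  move=> col; have := congr1 (fun M : 'M[rat]_(r, s) => M i0 col) (mulmx_ker A).
  by rewrite !mxE.
pose D := \prod_k denq (c k).
have Dnz : D != 0 by apply/prodf_neq0 => k _; apply: denq_neq0.
pose m k := numq (c k) * \prod_(l | l != k) denq (c l).
have hm : forall k, (m k)%:~R = c k * D%:~R.
  move=> k; rewrite /m /D [X in _ = _ * X%:~R](bigD1 k) //= !intrM numqE mulrA.
  by [].
exists m; split.
  exists j0; apply/negP => /eqP h; have := hm j0; rewrite h /= => /esym /eqP.
  by rewrite mulf_eq0 intr_eq0 (negbTE nz) (negbTE Dnz).
move=> col; apply/eqP; rewrite -(intr_eq0 rat) rmorph_sum /=.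
under eq_bigr => k _ do rewrite intrM hm -mulrA [D%:~R * _]mulrC mulrA.
rewrite -mulr_suml.
have -> : \sum_i c i * (w i col)%:~R = \sum_k c k * A k col.
  by apply: eq_bigr => k _; rewrite mxE.
by rewrite hc mul0r.
Qed.

Section Main.
Variables (n : nat) (e : rel 'I_n).
Notation vec := {ffun 'I_n -> int}.
Notation G := (GG e).

Definition Xg (z : vec) : G := mkGG z 0.
Definition Yg (t : {ffun Yidx e -> int}) : G := @mkGG n e 0 t.
Definition Eu (i : 'I_n) (c : int) : vec := [ffun k => if k == i then c else 0].

Lemma GG_eq (a b : G) : gz a = gz b -> gt a = gt b -> a = b.
Proof. by case: a => ? ?; case: b => ? ? /= -> ->. Qed.

Lemma gz_mul (a b : G) : gz (GGmul a b) = gz a + gz b.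
Proof. by apply/ffunP => i; rewrite !ffunE. Qed.

Lemma decomp (g : G) : g = GGmul (Yg (gt g)) (Xg (gz g)).
Proof.
by apply: GG_eq; apply/ffunP => i; rewrite !ffunE /= ?ffunE ?mul0r ?addr0 ?add0r.
Qed.

Lemma YM t t' : Yg (t + t') = GGmul (Yg t) (Yg t').
Proof.
by apply: GG_eq; apply/ffunP => i; rewrite !ffunE /= ?ffunE ?mul0r ?addr0 ?add0r.
Qed.

Lemma XM z z' : GGmul (Xg z) (Xg z') =
  GGmul (Yg [ffun p : Yidx e => z (val p).2 * z' (val p).1]) (Xg (z + z')).
Proof.
by apply: GG_eq; apply/ffunP => i; rewrite !ffunE /= ?ffunE ?mul0r ?addr0 ?add0r.
Qed.

Definition delta (p : Yidx e) (c : int) : {ffun Yidx e -> int} :=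
  [ffun q => if q == p then c else 0].

Lemma Ydelta (p : Yidx e) c :
  GGmul (Yg (delta p c)) (GGmul (Xg (Eu (val p).1 1)) (Xg (Eu (val p).2 c))) =
  GGmul (Xg (Eu (val p).2 c)) (Xg (Eu (val p).1 1)).
Proof.
case: p => [[i j] hp]; have /andP [ij _] := hp; rewrite /= in ij.
apply: GG_eq; apply/ffunP => k; rewrite !ffunE /= ?ffunE /=.
  by rewrite add0r addrC.
rewrite -(inj_eq val_inj) /=.
case: k => [[k1 k2] hk]; have /andP [k12 _] := hk; rewrite /= in k12 *.
rewrite mul0r addr0 !add0r xpair_eqE.
have [e2 | ne2] := eqVneq k2 i.
  have [e1 | ne1] := eqVneq k1 j.
    by rewrite e1 e2 in k12; move: (ltn_trans k12 ij); rewrite ltnn.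
  have nij : (i == j) = false by rewrite -(inj_eq val_inj) /= ltn_eqF.
  by rewrite e2 nij andbF mul0r mulr0 addr0.
rewrite mul0r addr0.
by have [e1|ne1] := eqVneq k1 i; have [e3|ne3] := eqVneq k2 j;
  rewrite /= ?mulr1 ?mulr0 ?mul0r ?addr0.
Qed.

Lemma additive_mulz (U V : zmodType) (f : U -> V) :
  (forall x y, f (x + y) = f x + f y) -> forall x c, f (x *~ c) = f x *~ c.
Proof.
move=> fD.
have f0 : f 0 = 0.
  have h := fD 0 0; rewrite addr0 in h.
  by have := congr1 (fun v => v - f 0) h; rewrite subrr addrK => /esym.
have fN x : f (- x) = - f x.
  by apply/eqP; rewrite -(inj_eq (addrI (f x))) -fD !subrr f0.
have fMn x k : f (x *+ k) = f x *+ k.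
  by elim: k => [|k IH]; rewrite ?mulr0n ?f0 // !mulrS fD IH.
move=> x [k|k]; first by rewrite -!pmulrn fMn.
by rewrite NegzE !mulrNz -!pmulrn fN fMn.
Qed.

Lemma comm_cond (a b : G) : GGmul a b = GGmul b a ->
  forall p : Yidx e, gz a (val p).2 * gz b (val p).1 = gz b (val p).2 * gz a (val p).1.
Proof.
move=> h p; have := congr1 (fun g => gt g p) h; rewrite /= !ffunE.
by rewrite (addrC (gt b p)) => /addrI.
Qed.

Lemma comm_of_cond (a b : G) :
  (forall p : Yidx e, gz a (val p).2 * gz b (val p).1 = gz b (val p).2 * gz a (val p).1) ->
  GGmul a b = GGmul b a.
Proof.
move=> H; apply: GG_eq; first by rewrite !gz_mul addrC.
by apply/ffunP => p; rewrite /= !ffunE (addrC (gt a p)) H.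
Qed.

Lemma Eu_scale i c : Eu i c = Eu i 1 *~ c.
Proof.
apply/ffunP => x; rewrite ffunMzE !ffunE.
by case: eqP => _; rewrite ?mul0rz // mulrzz mul1r.
Qed.

Lemma vec_decomp (z : vec) : z = \sum_i Eu i (z i).
Proof.
apply/ffunP => x; rewrite sum_ffunE (bigD1 x) //= ffunE eqxx big1 ?addr0 //.
by move=> i /negbTE; rewrite ffunE eq_sym => ->.
Qed.

Lemma Y_of_gz0 (g : G) : gz g = 0 -> g = Yg (gt g).
Proof. by move=> h; apply: GG_eq. Qed.

Section Hom.
Variable phi : G -> G.
Hypothesis hom : forall a b, phi (GGmul a b) = GGmul (phi a) (phi b).

Definition psi g := gz (phi g).
Definition Lm z := psi (Xg z).

Lemma psiM a b : psi (GGmul a b) = psi a + psi b.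
Proof. by rewrite /psi hom gz_mul. Qed.

Lemma psiY t : psi (Yg t) = 0.
Proof.
have YD t1 t2 : psi (Yg (t1 + t2)) = psi (Yg t1) + psi (Yg t2) by rewrite YM psiM.
have Y0 : psi (Yg 0) = 0.
  have h := YD 0 0; rewrite addr0 in h.
  by have := congr1 (fun v => v - psi (Yg 0)) h; rewrite subrr addrK => /esym.
have -> : t = \sum_p delta p (t p).
  apply/ffunP => q; rewrite sum_ffunE (bigD1 q) //= ffunE eqxx big1 ?addr0 //.
  by move=> p /negbTE; rewrite ffunE eq_sym => ->.
rewrite (big_morph (fun t => psi (Yg t)) YD Y0) big1 // => p _.
have := congr1 psi (Ydelta p (t p)); rewrite !psiM.
rewrite [X in _ = X]addrC -{2}[_ + psi (Xg _)]add0r.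
by move/addIr.
Qed.

Lemma psiL g : psi g = Lm (gz g).
Proof. by rewrite {1}(decomp g) psiM psiY add0r. Qed.

Lemma LD z z' : Lm (z + z') = Lm z + Lm z'.
Proof. by have := congr1 psi (XM z z'); rewrite !psiM psiY add0r. Qed.

Lemma L0 : Lm 0 = 0.
Proof.
have h := LD 0 0; rewrite addr0 in h.
by have := congr1 (fun v => v - Lm 0) h; rewrite subrr addrK => /esym.
Qed.

Lemma LMz z c : Lm (z *~ c) = Lm z *~ c.
Proof. exact: (additive_mulz LD). Qed.

Lemma L_sum (I : Type) (r : seq I) (F : I -> vec) :
  Lm (\sum_(i <- r) F i) = \sum_(i <- r) Lm (F i).
Proof. exact: (big_morph Lm LD L0). Qed.

End Hom.

Section Key.
Hypotheses (e_sym : symmetric e) (e_irr : irreflexive e).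
Variable phi : G -> G.
Hypothesis hom : forall a b, phi (GGmul a b) = GGmul (phi a) (phi b).
Hypothesis Linj : forall z, Lm phi z = 0 -> z = 0.

Lemma comm_nbr i k : (k == i) || e i k ->
  GGmul (Xg (Eu i 1)) (Xg (Eu k 1)) = GGmul (Xg (Eu k 1)) (Xg (Eu i 1)).
Proof.
case/orP => [/eqP -> // | eik]; apply: comm_of_cond => -[[p1 p2] hp] /=.
have /andP [lt np] := hp; rewrite /= in lt np.
rewrite !ffunE.
case: (eqVneq p2 i) => [E2|N2]; case: (eqVneq p1 k) => [E1|N1];
  case: (eqVneq p2 k) => [E3|N3]; case: (eqVneq p1 i) => [E4|N4];
  rewrite ?mulr1 ?mulr0 ?mul0r //; exfalso; subst;
  first [ by rewrite e_irr in eik | by rewrite e_sym eik in np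
        | by rewrite eik in np | by rewrite eqxx in N1 | by rewrite eqxx in N2
        | by rewrite eqxx in N3 | by rewrite eqxx in N4 ].
Qed.

Lemma pair_cond (u w : vec) :
  (forall p : Yidx e, u (val p).2 * w (val p).1 = w (val p).2 * u (val p).1) ->
  forall a b, a != b -> ~~ e a b -> u a * w b = w a * u b.
Proof.
move=> H a b nab neab.
case: (ltngtP a b) => [lt|lt|eq].
- have hp : nonedge e (a, b) by rewrite /nonedge /= lt neab.
  have := H (exist _ (a, b) hp); rewrite /= => h.
  by rewrite [w a * u b]mulrC h mulrC.
- have hp : nonedge e (b, a) by rewrite /nonedge /= lt e_sym neab.
  by have := H (exist _ (b, a) hp); rewrite /=.
- by move: nab; rewrite -(inj_eq val_inj) /= eq eqxx.
Qed.

Lemma key i j : (deg e j < deg e i)%N -> Lm phi (Eu i 1) j = 0.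
Proof.
move=> ltji; set u := Lm phi (Eu i 1).
apply/eqP; apply: contraT => uj.
pose K := [set k | (k == i) || e i k].
pose J := [set m | (m == j) || e j m].
have cardK : #|K| = (deg e i).+1.
  have -> : K = i |: [set k | e i k] by apply/setP => k; rewrite !inE.
  by rewrite cardsU1 inE e_irr.
have cardJ : #|J| = (deg e j).+1.
  have -> : J = j |: [set k | e j k] by apply/setP => k; rewrite !inE.
  by rewrite cardsU1 inE e_irr.
have ltJK : (#|J| < #|K|)%N by rewrite cardK cardJ ltnS.
pose w (k : 'I_#|K|) (c : 'I_#|J|) := Lm phi (Eu (enum_val k) 1) (enum_val c).
have [m [[r0 mr0] hsum]] := dep_lemma w ltJK.
have wcomm : forall k : 'I_#|K|, forall a b, a != b -> ~~ e a b ->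
    u a * Lm phi (Eu (enum_val k) 1) b = Lm phi (Eu (enum_val k) 1) a * u b.
  move=> k; apply: pair_cond.
  have kK : enum_val k \in K := enum_valP k.
  have := congr1 phi (comm_nbr (i := i) (k := enum_val k) _).
  rewrite inE in kK; move/(_ kK); rewrite !hom => /comm_cond.
  by [].
have jJ : j \in J by rewrite inE eqxx.
have hJ : forall mm, mm \in J -> \sum_k m k * Lm phi (Eu (enum_val k) 1) mm = 0.
  by move=> mm mmJ; rewrite -(enum_rankK_in jJ mmJ); apply: hsum.
have hall : forall mm, \sum_k m k * Lm phi (Eu (enum_val k) 1) mm = 0.
  move=> mm; case: (boolP (mm \in J)) => [/hJ // | nJ].
  rewrite inE negb_or in nJ; case/andP: nJ => nmj nejm.
  have jmm : j != mm by rewrite eq_sym.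
  have : (\sum_k m k * Lm phi (Eu (enum_val k) 1) mm) * u j == 0.
    rewrite mulr_suml.
    rewrite (eq_bigr (fun k => m k * Lm phi (Eu (enum_val k) 1) j * u mm)).
      by rewrite -mulr_suml hJ // mul0r.
    move=> k _.
    by rewrite -mulrA (mulrC (Lm phi (Eu (enum_val k) 1) mm)) (wcomm k j mm jmm nejm) mulrA.
  by rewrite mulf_eq0 (negbTE uj) orbF => /eqP.
have Z : \sum_k Eu (enum_val k) (m k) = 0.
  apply: Linj; apply/ffunP => mm.
  rewrite L_sum // sum_ffunE ffunE; apply: (etrans _ (hall mm)); apply: eq_bigr => k _.
  by rewrite Eu_scale LMz // ffunMzE mulrzz mulrC.
have := congr1 (fun z : vec => z (enum_val r0)) Z.
rewrite sum_ffunE ffunE (bigD1 r0) //= ffunE eqxx big1 ?addr0.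
  by move=> h; rewrite h eqxx in mr0.
by move=> k nk; rewrite ffunE (inj_eq enum_val_inj) eq_sym (negbTE nk).
Qed.

End Key.

Lemma Linj_of (phi phi' : G -> G)
  (hom' : forall a b, phi' (GGmul a b) = GGmul (phi' a) (phi' b))
  (K1 : cancel phi phi') : forall z, Lm phi z = 0 -> z = 0.
Proof.
move=> z h; have g0 : gz (phi (Xg z)) = 0 := h.
have := K1 (Xg z); rewrite (Y_of_gz0 g0) => E.
by have := psiY hom' (gt (phi (Xg z))); rewrite /psi E.
Qed.

Lemma preserve (e_sym : symmetric e) (e_irr : irreflexive e) (d : nat) (phi : G -> G)
  (hom : forall a b, phi (GGmul a b) = GGmul (phi a) (phi b))
  (Linj : forall z, Lm phi z = 0 -> z = 0) :
  forall g, inH d g -> inH d (phi g).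
Proof.
move=> g Hg j dj.
have := psiL hom g; rewrite /psi => ->.
rewrite (vec_decomp (gz g)) L_sum // sum_ffunE big1 // => i _.
rewrite Eu_scale LMz // ffunMzE mulrzz.
case: (ltnP (deg e i) d) => h; first by rewrite (Hg i h) mulr0.
by rewrite (key e_sym e_irr hom Linj) ?mul0r //; exact: leq_trans dj h.
Qed.
End Main.

Unset Implicit Arguments.
Close Scope ring_scope.

Theorem theorem4p3 (n : nat) (e : rel 'I_n)
  (e_sym : symmetric e) (e_irr : irreflexive e)
  (d : nat) (hd1 : (1 <= d)%N) (hd2 : (d <= n - 1)%N)
  (phi : GG e -> GG e) (hphi : is_aut phi) :
  (forall g, inH d g -> inH d (phi g)) /\
  (forall h, inH d h -> exists g, inH d g /\ phi g = h).
Proof.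
case: hphi => [[phi' K1 K2] hom].
have hom' : forall a b, phi' (GGmul a b) = GGmul (phi' a) (phi' b).
  by move=> a b; apply: (can_inj K1); rewrite hom !K2.
have Li := Linj_of hom' K1.
have Li' := Linj_of hom K2.
split; first exact: (@preserve _ _ e_sym e_irr d _ hom Li).
move=> h Hh; exists (phi' h); split; last exact: K2.
exact: (@preserve _ _ e_sym e_irr d _ hom' Li' h Hh).
Qed.
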